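(* Let $I$ be a finite set of products, each $i\in I$ having a real (positive or negative) unit profit $up(i)$, and let $D=\{T_1,\dots,T_n\}$ be a database of transactions, where each transaction $T_c$ is a subset of $I$ with a positive purchase quantity $q(i,T_c)$ for each $i\in T_c$, and is assigned a time period $pe(T_c)$. Let $\prec$ be the total order on $I$ described in the context, and consider the set-enumeration tree over $I$ with respect to $\prec$, in which the children of a node $X\subseteq I$ are the sets $Y=X\cup\{z\}$ with $z\in I\setminus X$ and $x\prec z$ for all $x\in X$. Then for every node $X$, every child $Y$ of $X$, and every time period $h$, $$p(Y,h)\le pp(X,h)+rpp(X,h),$$ and over the whole database $$p(Y)\le pp(X)+rpp(X).$$
   Context: The profit of $i$ in $T_c$ is $p(i,T_c)=up(i)\cdot q(i,T_c)$; for $X\subseteq T_c$, $p(X,T_c)=\sum_{i\in X}p(i,T_c)$. The profit of $X$ in period $h$ is $p(X,h)=\sum_{T_c\in D,\ X\subseteq T_c,\ pe(T_c)=h}p(X,T_c)$, and $p(X)=\sum_{T_c\in D,\ X\subseteq T_c}p(X,T_c)$. The redefined transaction profit is $rtp(T_c)=\sum_{i\in T_c,\ p(i,T_c)>0}p(i,T_c)$ and $RTWU(X)=\sum_{T_c\in D,\ X\subseteq T_c}rtp(T_c)$. The total order $\prec$ sorts products by ascending $RTWU(\{i\})$, with every product of negative unit profit placed after all products of positive unit profit. For $X\subseteq T_c$: the positive profit $pp(X,T_c)$ is the sum of the nonnegative values $p(i,T_c)$, $i\in X$; the negative profit $np(X,T_c)$ is the sum of the negative values $p(i,T_c)$, $i\in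 X$ (so $p(X,T_c)=pp(X,T_c)+np(X,T_c)$); the remaining positive profit is $rpp(X,T_c)=\sum\{p(i,T_c): i\in T_c\setminus X,\ x\prec i \text{ for all } x\in X,\ p(i,T_c)\ge 0\}$. Then $pp(X,h)$, $rpp(X,h)$ are the sums of $pp(X,T_c)$, $rpp(X,T_c)$ over transactions $T_c\supseteq X$ with $pe(T_c)=h$, and $pp(X)$, $rpp(X)$ are the corresponding sums over all transactions $T_c\supseteq X$ in $D$. *)

(* Defs.v *)
From mathcomp Require Import all_boot all_order all_algebra.
Set Implicit Arguments. Unset Strict Implicit. Unset Printing Implicit Defensive.
Import Order.TTheory GRing.Theory Num.Theory.
Local Open Scope ring_scope.

(* Database: products form a finite type I; transactions are indexed by 'I_n;
   T c : {set I} is the itemset of transaction c, q c i its purchase quantity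
   of product i, pe c its period; up i is the unit profit of i. *)

Section Profits.
Variables (I : finType) (R : realFieldType) (n : nat).

Definition pI (up : I -> R) (T : 'I_n -> {set I}) (q : 'I_n -> I -> R)
  (i : I) (c : 'I_n) : R := up i * q c i.
Definition pXT (up : I -> R) (T : 'I_n -> {set I}) (q : 'I_n -> I -> R) (X : {set I}) (c : 'I_n) : R := \sum_(i in X) pI up T q i c.
Definition pXh (up : I -> R) (T : 'I_n -> {set I}) (q : 'I_n -> I -> R) (pe : 'I_n -> nat) (X : {set I}) (h : nat) : R :=
  \sum_(c < n | (X \subset T c) && (pe c == h)) pXT up T q X c.
Definition pX (up : I -> R) (T : 'I_n -> {set I}) (q : 'I_n -> I -> R) (X : {set I}) : R :=
  \sum_(c < n | X \subset T c) pXT up T q X c.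
Definition rtp (up : I -> R) (T : 'I_n -> {set I}) (q : 'I_n -> I -> R) (c : 'I_n) : R :=
  \sum_(i in T c | 0 < pI up T q i c) pI up T q i c.
Definition RTWU (up : I -> R) (T : 'I_n -> {set I}) (q : 'I_n -> I -> R) (X : {set I}) : R :=
  \sum_(c < n | X \subset T c) rtp up T q c.
Definition ppT (up : I -> R) (T : 'I_n -> {set I}) (q : 'I_n -> I -> R) (X : {set I}) (c : 'I_n) : R :=
  \sum_(i in X | 0 <= pI up T q i c) pI up T q i c.
(* rpp(X,T_c), w.r.t. the order ord (ord x i means x ≺ i) *)
Definition rppT (up : I -> R) (T : 'I_n -> {set I}) (q : 'I_n -> I -> R) (ord : rel I) (X : {set I}) (c : 'I_n) : R :=
  \sum_(i in T c :\: X | [forall x in X, ord x i] && (0 <= pI up T q i c))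
     pI up T q i c.
Definition pph (up : I -> R) (T : 'I_n -> {set I}) (q : 'I_n -> I -> R) (pe : 'I_n -> nat) (X : {set I}) (h : nat) : R :=
  \sum_(c < n | (X \subset T c) && (pe c == h)) ppT up T q X c.
Definition rpph (up : I -> R) (T : 'I_n -> {set I}) (q : 'I_n -> I -> R) (ord : rel I) (pe : 'I_n -> nat) (X : {set I}) (h : nat) : R :=
  \sum_(c < n | (X \subset T c) && (pe c == h)) rppT up T q ord X c.
Definition ppX (up : I -> R) (T : 'I_n -> {set I}) (q : 'I_n -> I -> R) (X : {set I}) : R :=
  \sum_(c < n | X \subset T c) ppT up T q X c.
Definition rppX (up : I -> R) (T : 'I_n -> {set I}) (q : 'I_n -> I -> R) (ord : rel I) (X : {set I}) : R :=
  \sum_(c < n | X \subset T c) rppT up T q ord X c.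

Definition processing_order (up : I -> R) (T : 'I_n -> {set I}) (q : 'I_n -> I -> R) (ord : rel I) : Prop :=
  [/\ (forall i, ~~ ord i i),
      (forall i j k, ord i j -> ord j k -> ord i k),
      (forall i j, i != j -> ord i j || ord j i),
      (forall i j, 0 < up i -> up j < 0 -> ord i j) &
      (forall i j, (up i < 0) = (up j < 0) ->
         RTWU up T q [set i] < RTWU up T q [set j] -> ord i j)].
End Profits.

Definition is_child (I : finType) (ord : rel I) (X Y : {set I}) : Prop :=
  exists z, [/\ z \notin X, (forall x, x \in X -> ord x z) & Y = z |: X].

(* Main.v *)
Require Import Defs.
From mathcomp Require Import all_boot all_order all_algebra.
Import Order.TTheory GRing.Theory Num.Theory.
Local Open Scope ring_scope.

Section Aux.
Variables (I : finType) (R : realFieldType) (n : nat)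
  (up : I -> R) (T : 'I_n -> {set I}) (q : 'I_n -> I -> R) (ord : rel I).

Lemma ppT_ge0 (X : {set I}) c : 0 <= ppT up T q X c.
Proof. by apply: sumr_ge0 => i /andP[]. Qed.

Lemma rppT_ge0 (X : {set I}) c : 0 <= rppT up T q ord X c.
Proof. by apply: sumr_ge0 => i /andP[_ /andP[]]. Qed.

Lemma pXT_le_ppT (X : {set I}) c : pXT up T q X c <= ppT up T q X c.
Proof.
rewrite /pXT /ppT big_mkcondr /=; apply: ler_sum => i _.
by case: ifP => // /negbT; rewrite -ltNge => /ltW.
Qed.

Lemma step (X : {set I}) (z : I) (c : 'I_n) : z \notin X -> (forall x, x \in X -> ord x z) ->
  z |: X \subset T c ->
  pXT up T q (z |: X) c <= ppT up T q X c + rppT up T q ord X c.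
Proof.
move=> zX hord sub.
rewrite /pXT big_setU1 //= addrC; apply: lerD; first exact: pXT_le_ppT.
have zT : z \in T c by apply: (subsetP sub); rewrite setU11.
case: (leP 0 (pI up T q z c)) => hz; last by apply: le_trans (ltW hz) (rppT_ge0 _ _).
rewrite /rppT (bigD1 z) /=; last first.
  rewrite in_setD zX zT hz /= andbT; apply/forall_inP => x xX; exact: hord.
by rewrite lerDl; apply: sumr_ge0 => i /andP[/andP[_ /andP[]]].
Qed.

Lemma sum_le (P Q : pred 'I_n) (f g : 'I_n -> R) :
  (forall c, P c -> Q c) -> (forall c, P c -> f c <= g c) ->
  (forall c, Q c -> 0 <= g c) ->
  \sum_(c < n | P c) f c <= \sum_(c < n | Q c) g c.
Proof.
move=> PQ fg g0; rewrite [X in _ <= X]big_mkcond [X in X <= _]big_mkcond.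
apply: ler_sum => c _; case: ifP => Pc; first by rewrite (PQ _ Pc) fg.
by case: ifP => // /g0.
Qed.
End Aux.

Theorem lemma2 (I : finType) (R : realFieldType) (n : nat)
  (up : I -> R) (T : 'I_n -> {set I}) (q : 'I_n -> I -> R) (pe : 'I_n -> nat)
  (ord : rel I) :
  (forall i, up i != 0) ->
  (forall c i, i \in T c -> 0 < q c i) ->
  processing_order up T q ord ->
  forall X Y : {set I}, is_child ord X Y ->
    (forall h : nat,
       pXh up T q pe Y h <= pph up T q pe X h + rpph up T q ord pe X h)
    /\ pX up T q Y <= ppX up T q X + rppX up T q ord X.
Proof.
move=> _ _ _ X Y [z [zX hord ->]].
have sXY c : z |: X \subset T c -> X \subset T c.
  by apply: subset_trans; apply: subsetUr.
split.
- move=> h; rewrite /pXh /pph /rpph -big_split /=.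
  apply: sum_le.
  + by move=> c /andP[/sXY -> ->].
  + by move=> c /andP[s _]; apply: step.
  + by move=> c _; apply: addr_ge0; [apply: ppT_ge0 | apply: rppT_ge0].
- rewrite /pX /ppX /rppX -big_split /=.
  apply: sum_le.
  + exact: sXY.
  + by move=> c s; apply: step.
  + by move=> c _; apply: addr_ge0; [apply: ppT_ge0 | apply: rppT_ge0].
Qed.
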